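(* Let $n\ge1$ and $a'_\ell=\mathrm{cmr}(a_\ell)$ for $\ell=1,\dots,n$. Then in the plactic monoid $\mathcal A_n^*/{\equiv_{\mathrm{knu}}}$: $a'_p\,a'_r\,a'_q\equiv_{\mathrm{knu}}a'_r\,a'_p\,a'_q$ whenever $1\le p\le q<r\le n$, and $a'_q\,a'_p\,a'_r\equiv_{\mathrm{knu}}a'_q\,a'_r\,a'_p$ whenever $1\le p<q\le r\le n$. Consequently, for all $u,v\in\mathcal A_n^*$, $u\equiv_{\mathrm{knu}}v$ implies $\mathrm{cmr}(u)\equiv_{\mathrm{knu}}\mathrm{cmr}(v)$.
   Context: $\mathcal A_n=\{a_1<\cdots<a_n\}$. The co-mirror of a letter is $\mathrm{cmr}(a_\ell)=a_na_{n-1}\cdots a_1$ with the letter $a_{n-\ell+1}$ omitted (a word of length $n-1$), extended to words by $\mathrm{cmr}(a_{\ell_1}\cdots a_{\ell_m})=\mathrm{cmr}(a_{\ell_1})\cdots\mathrm{cmr}(a_{\ell_m})$. $\equiv_{\mathrm{knu}}$ is the congruence on $\mathcal A_n^*$ generated by $xzy=zxy$ ($x\le y<z$) and $yxz=yzx$ ($x<y\le z$) for letters $x,y,z$. *)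

(* Defs.v *)
From mathcomp Require Import all_boot all_order.
Set Implicit Arguments. Unset Strict Implicit. Unset Printing Implicit Defensive.

(* The alphabet A_n = {a_1 < ... < a_n} is modelled by 'I_n, with a_l
   represented by the ordinal l-1 (order preserved). Words are seq 'I_n. *)

Inductive knuth_rel {n : nat} : seq 'I_n -> seq 'I_n -> Prop :=
| knuth1 (x y z : 'I_n) : x <= y -> y < z -> knuth_rel [:: x; z; y] [:: z; x; y]
| knuth2 (x y z : 'I_n) : x < y -> y <= z -> knuth_rel [:: y; x; z] [:: y; z; x].

Inductive knu_equiv {n : nat} : seq 'I_n -> seq 'I_n -> Prop :=
| knu_refl u : knu_equiv u u
| knu_step u v l r : knuth_rel l r -> knu_equiv (u ++ l ++ v) (u ++ r ++ v)
| knu_sym u v : knu_equiv u v -> knu_equiv v u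
| knu_trans u v w : knu_equiv u v -> knu_equiv v w -> knu_equiv u w.

(* Co-mirror of a letter: a_n a_{n-1} ... a_1 with a_{n-l+1} omitted.
   For i = l-1, the omitted letter a_{n-l+1} is the ordinal n-l = rev_ord i. *)
Definition cmr_letter {n : nat} (i : 'I_n) : seq 'I_n :=
  [seq j <- rev (enum 'I_n) | j != rev_ord i].

Definition cmr {n : nat} (w : seq 'I_n) : seq 'I_n := flatten (map cmr_letter w).

(* Main.v *)
Require Import Defs.
From mathcomp Require Import all_boot all_order.
From mathcomp Require Import zify.
Set Implicit Arguments. Unset Strict Implicit. Unset Printing Implicit Defensive.

Inductive kr : seq nat -> seq nat -> Prop :=
| kr1 x y z : x <= y -> y < z -> kr [:: x; z; y] [:: z; x; y]
| kr2 x y z : x < y -> y <= z -> kr [:: y; x; z] [:: y; z; x].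

Inductive knu : seq nat -> seq nat -> Prop :=
| knu0 u : knu u u
| knuS u v l r : kr l r -> knu (u ++ l ++ v) (u ++ r ++ v)
| knuY u v : knu u v -> knu v u
| knuT u v w : knu u v -> knu v w -> knu u w.

Lemma knu_cat a b u v : knu a b -> knu (u ++ a ++ v) (u ++ b ++ v).
Proof.
elim=> {a b} [a|u0 v0 l r H|a b _ IH|a b c _ IH1 _ IH2].
- exact: knu0.
- by move: (knuS (u ++ u0) (v0 ++ v) H); rewrite -!catA.
- exact: knuY.
- exact: knuT IH2.
Qed.

Lemma knu_l u a b : knu a b -> knu (u ++ a) (u ++ b).
Proof. by move=> H; have := knu_cat u [::] H; rewrite !cats0. Qed.

Lemma knu_r v a b : knu a b -> knu (a ++ v) (b ++ v).
Proof. by move=> H; exact: (knu_cat [::] v H). Qed.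

Lemma knu_kr l r : kr l r -> knu l r.
Proof. by move=> H; have := knuS [::] [::] H; rewrite /= !cats0. Qed.

Lemma gtn_trans : transitive gtn.
Proof. by move=> a b c /= H1 H2; lia. Qed.

Lemma S1 U x y t : sorted gtn (U ++ [:: y]) -> x <= y ->
  knu (U ++ x :: y :: t) (x :: U ++ y :: t).
Proof.
elim: U => [|z U IH] /= Hs Hxy; first exact: knu0.
have Hs' := path_sorted Hs.
apply: knuT (knu_l [:: z] (IH Hs' Hxy)) _ => /=.
have Hm := order_path_min gtn_trans Hs.
case: U Hs Hm {IH Hs'} => [|h U] /= Hs Hm.
- apply: knuY; move: Hs => /andP[Hzy _]; by have := knuS [::] t (kr1 Hxy Hzy).
- move: Hs => /andP[Hzh Hs].
  have Hhy : y < h.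
    have := order_path_min gtn_trans Hs => /allP; apply; by rewrite mem_cat mem_head orbT.
  apply: knuY; have := knuS [::] (U ++ y :: t) (kr1 (ltnW (leq_ltn_trans Hxy Hhy)) Hzh).
  by rewrite /=.
Qed.

Lemma S2 L u w : sorted gtn (u :: L) -> u <= w ->
  knu (u :: w :: L) (u :: L ++ [:: w]).
Proof.
elim: L u => [|l L IH] u /= Hs Huw; first exact: knu0.
move: Hs => /andP[Hul Hs].
apply: knuT (knu_l [:: u] (IH l Hs (ltnW (leq_trans Hul Huw)))).
apply: knuY; have := knuS [::] L (kr2 Hul Huw); by rewrite /=.
Qed.

Lemma Cent1 s x : sorted gtn s -> x \in s -> knu (x :: s) (s ++ [:: x]).
Proof.
move=> Hs Hx; case/splitPr: Hx Hs => U L.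
rewrite sorted_cat_cons -cats1 => /andP[H1 H2].
have K1 := knuY (@S1 U x x L H1 (leqnn x)).
have K2 : knu (U ++ [:: x, x & L]) (U ++ x :: L ++ [:: x]) by apply: knu_l; exact: S2.
have := knuT K1 K2; by rewrite -catA.
Qed.

Lemma Cent s w : sorted gtn s -> all (mem s) w -> knu (w ++ s) (s ++ w).
Proof.
move=> Hs; elim: w => [|x w IH] /=; first by move=> _; rewrite cats0; exact: knu0.
move=> /andP[Hx Hw].
apply: knuT (knu_l [:: x] (IH Hw)) _ => /=.
have := knu_r w (Cent1 Hs Hx); by rewrite -catA.
Qed.

Lemma CentM u w s v : sorted gtn s -> all (mem s) w ->
  knu (u ++ w ++ s ++ v) (u ++ s ++ w ++ v).
Proof. by move=> Hs Hw; have := knu_cat u v (Cent Hs Hw); rewrite -!catA. Qed.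

Definition D lo hi := rev (iota lo (hi - lo)).

Lemma D_split lo mid hi : lo <= mid -> mid <= hi -> D lo hi = D mid hi ++ D lo mid.
Proof.
move=> H1 H2; rewrite /D.
have -> : hi - lo = (mid - lo) + (hi - mid) by lia.
rewrite iotaD rev_cat; congr (rev (iota _ _) ++ _); lia.
Qed.

Lemma D_nil a : D a a = [::].
Proof. by rewrite /D subnn. Qed.

Lemma D1 a : D a a.+1 = [:: a].
Proof. by rewrite /D subSnn. Qed.

Lemma D_cons lo hi : lo <= hi -> D lo hi.+1 = hi :: D lo hi.
Proof. by move=> H; rewrite (@D_split lo hi hi.+1) // D1. Qed.

Lemma D_rcons lo hi : lo < hi -> D lo hi = D lo.+1 hi ++ [:: lo].
Proof. by move=> H; rewrite (@D_split lo lo.+1 hi) // D1. Qed.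

Lemma D_sorted lo hi : sorted gtn (D lo hi).
Proof. rewrite /D rev_sorted; exact: iota_ltn_sorted. Qed.

Lemma mem_D lo hi x : (x \in D lo hi) = (lo <= x < hi).
Proof. rewrite /D mem_rev mem_iota; lia. Qed.

Definition cm n m := D m.+1 n ++ D 0 m.
Definition F n := D 0 n.
Definition cm2 n x y := D y.+1 n ++ D x.+1 y ++ D 0 x.

Lemma cm_filter n m : m < n -> [seq j <- D 0 n | j != m] = cm n m.
Proof.
move=> H; rewrite (@D_split 0 m.+1 n) // D_cons // filter_cat /= eqxx.
rewrite /cm; congr (_ ++ _); apply/all_filterP; apply/allP => j; rewrite mem_D /=; lia.
Qed.

Lemma sorted_cm n m : m < n -> sorted gtn (cm n m).
Proof. move=> H; rewrite -cm_filter //; apply: (sorted_filter gtn_trans); exact: D_sorted. Qed.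

Ltac allm := apply/allP => j; rewrite /cm /cm2 /F ?mem_cat ?mem_D ?inE => Hj;
  rewrite /cm /cm2 /F ?mem_cat ?mem_D ?inE; lia.

Lemma XB n m : m.+1 < n -> knu (m :: cm n m) (cm n m.+1 ++ [:: m.+1]).
Proof.
move=> H; rewrite /cm (@D_split m.+1 m.+2 n) // D1 D_cons // -!catA /=.
have Hs : sorted gtn (D m.+2 n ++ [:: m.+1]).
  by rewrite -D1 -D_split //; exact: D_sorted.
apply: (knuT (knuY (@S1 (D m.+2 n) m m.+1 (D 0 m) Hs (leqnSn m)))).
apply: knu_l; apply: S2 => //; rewrite -D_cons //; exact: D_sorted.
Qed.

Lemma K n k b : b + k < n ->
  knu (D b (b + k) ++ cm n b) (cm n (b + k) ++ D b.+1 (b + k).+1).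
Proof.
elim: k b => [|k IH] b H.
  rewrite addn0 !D_nil /= cats0; exact: knu0.
rewrite (@D_rcons b (b + k.+1)); last by lia.
rewrite -catA /=.
have Hb : b.+1 < n by lia.
apply: (knuT (knu_l _ (XB Hb))).
rewrite catA.
have -> : b + k.+1 = b.+1 + k by lia.
have Hb' : b.+1 + k < n by lia.
apply: (knuT (knu_r _ (IH b.+1 Hb'))).
rewrite -catA; apply: knu_l.
rewrite (@D_rcons b.+1 (b.+1 + k).+1); last by lia.
exact: knu0.
Qed.

Lemma HH n x y : x < y -> y < n -> knu (cm n x ++ cm n y) (F n ++ cm2 n x y).
Proof.
move=> Hxy Hyn.
have Hxn : x < n by lia.
have Ey : cm n y = D y.+1 n ++ D x.+1 y ++ x :: D 0 x.
  by rewrite /cm (@D_split 0 x.+1 y) // D_cons.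
have EF : F n = D x.+1 n ++ x :: D 0 x by rewrite /F (@D_split 0 x.+1 n) // D_cons.
have S1 := knuY (@CentM [::] (D y.+1 n ++ D x.+1 y) (cm n x) (x :: D 0 x)
  (sorted_cm Hxn) ltac:(allm)).
have Hs : sorted gtn (x :: D 0 x) by rewrite -D_cons //; exact: D_sorted.
have S2 := @CentM (D y.+1 n ++ D x.+1 y ++ D x.+1 n) (D 0 x) (x :: D 0 x) [::]
  Hs ltac:(allm).
have S3 := knuY (@CentM [::] (D y.+1 n ++ D x.+1 y) (F n) (D 0 x)
  (D_sorted 0 n) ltac:(allm)).
rewrite Ey /cm2; rewrite EF in S3 *.
move: S1 S2 S3; rewrite /cm /= -!catA /= !cats0 => S1 S2 S3.
exact: (knuT S1 (knuT S2 (knuY S3))).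
Qed.

Lemma K' n b c : b <= c -> c < n ->
  knu (D b c ++ cm n b) (cm n c ++ D b.+1 c.+1).
Proof. move=> H1 H2; have := @K n (c - b) b; rewrite subnKC //; apply; lia. Qed.

Lemma XX n a b c : a < b -> b < c -> c < n ->
  knu (cm2 n a c ++ cm n b) (cm n c ++ cm2 n a b).
Proof.
move=> Hab Hbc Hcn.
have Hbn : b < n by lia.
have S1 := @CentM (D c.+1 n ++ D b c) (D a.+1 b ++ D 0 a) (cm n b) [::]
  (sorted_cm Hbn) ltac:(allm).
have S2 := knu_cat (D c.+1 n) (D a.+1 b ++ D 0 a) (@K' n b c (ltnW Hbc) Hcn).
have S3 := (@CentM [::] (D c.+1 n) (cm n c) (D b.+1 c.+1 ++ D a.+1 b ++ D 0 a)
  (sorted_cm Hcn) ltac:(allm)).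
rewrite /cm2 (@D_split a.+1 b c Hab (ltnW Hbc)) (@D_split b.+1 c.+1 n (ltnW Hbc) Hcn).
move: S1 S2 S3; rewrite /= -!catA /= !cats0 => S1 S2 S3.
rewrite /cm ?catA -!catA.
exact: (knuT S1 (knuT S2 S3)).
Qed.

Lemma YY n a b c : a < b -> b < c -> c < n ->
  knu (cm2 n b c ++ cm n a) (cm n b ++ cm2 n a c).
Proof.
move=> Hab Hbc Hcn.
have Han : a < n by lia.
have Hbn : b < n by lia.
have S1 := @CentM (D c.+1 n ++ D b.+1 c ++ D a b) (D 0 a) (cm n a) [::]
  (sorted_cm Han) ltac:(allm).
have S2 := knu_cat (D c.+1 n ++ D b.+1 c) (D 0 a) (@K' n a b (ltnW Hab) Hbn).
have S3 := (@CentM [::] (D c.+1 n ++ D b.+1 c) (cm n b) (D a.+1 b.+1 ++ D 0 a)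
  (sorted_cm Hbn) ltac:(allm)).
rewrite /cm2 (@D_split 0 a b (leq0n a) (ltnW Hab)) (@D_split a.+1 b.+1 c (ltnW Hab) Hbc) /cm ?catA -!catA.
move: S1 S2 S3; rewrite /= -!catA /= !cats0 => S1 S2 S3.
exact: (knuT S1 (knuT S2 S3)).
Qed.

Lemma P1 n a b c : a < b -> b <= c -> c < n ->
  knu (cm n c ++ cm n a ++ cm n b) (cm n a ++ cm n c ++ cm n b).
Proof.
move=> Hab Hbc Hcn.
have Hbn : b < n by lia.
have T1 := knu_l (cm n c) (HH Hab Hbn).
have T2 := @CentM [::] (cm n c) (F n) (cm2 n a b) (D_sorted 0 n) ltac:(allm).
have T3 : knu (F n ++ cm n c ++ cm2 n a b) (F n ++ cm2 n a c ++ cm n b).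
  apply: knu_l; case: (ltngtP b c) Hbc => // [Hbc' _|<- _].
    exact: knuY (XX Hab Hbc' Hcn).
  apply: knuY; apply: Cent; first exact: sorted_cm.
  allm.
have T4 : knu (F n ++ cm2 n a c ++ cm n b) (cm n a ++ cm n c ++ cm n b).
  rewrite (catA (F n)) (catA (cm n a)); apply: knuY; apply: knu_r; exact: HH (leq_trans Hab Hbc) Hcn.
rewrite !cat0s in T2.
exact: (knuT T1 (knuT T2 (knuT T3 T4))).
Qed.

Lemma P2 n a b c : a <= b -> b < c -> c < n ->
  knu (cm n b ++ cm n c ++ cm n a) (cm n b ++ cm n a ++ cm n c).
Proof.
move=> Hab Hbc Hcn.
have Hbn : b < n by lia.
have T1 : knu (cm n b ++ cm n c ++ cm n a) (F n ++ cm2 n b c ++ cm n a).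
  rewrite (catA (cm n b)) (catA (F n)); apply: knu_r; exact: HH Hbc Hcn.
have T3 := knu_l (cm n b) (knuY (HH (leq_ltn_trans Hab Hbc) Hcn)).
have T2 := @CentM [::] (cm n b) (F n) (cm2 n a c) (D_sorted 0 n) ltac:(allm).
have T0 : knu (F n ++ cm2 n b c ++ cm n a) (F n ++ cm n b ++ cm2 n a c).
  apply: knu_l; case: (ltngtP a b) Hab => // [Hab' _|-> _].
    exact: YY Hab' Hbc Hcn.
  apply: Cent; first exact: sorted_cm.
  allm.
rewrite !cat0s in T2.
exact: (knuT T1 (knuT T0 (knuT (knuY T2) T3))).
Qed.

Lemma knu_perm s t : knu s t -> perm_eq s t.
Proof.
elim=> {s t} [s|u v l r H|s t _ IH|s t w _ IH1 _ IH2].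
- exact: perm_refl.
- rewrite perm_cat2l perm_cat2r; case: H => x y z _ _.
  + by apply/permP => p /=; lia.
  + by apply/permP => p /=; lia.
- by rewrite perm_sym.
- exact: perm_trans IH2.
Qed.

Lemma knuE_cat n (a b u v : seq 'I_n) : knu_equiv a b -> knu_equiv (u ++ a ++ v) (u ++ b ++ v).
Proof.
elim=> {a b} [a|u0 v0 l r H|a b _ IH|a b c _ IH1 _ IH2].
- exact: knu_refl.
- by move: (knu_step (u ++ u0) (v0 ++ v) H); rewrite -!catA.
- exact: knu_sym.
- exact: knu_trans IH2.
Qed.

Lemma transfer n' (s t : seq nat) : knu s t -> all (fun k => k < n'.+1) s ->
  knu_equiv (map (@inord n') s) (map (@inord n') t).
Proof.
elim=> {s t} [s|u v l r H|s t Hst IH|s t w Hst IH1 Htw IH2] Hs.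
- exact: knu_refl.
- rewrite !map_cat; apply: knu_step.
  move: Hs; rewrite !all_cat => /and3P[_ Hl _].
  case: H Hl => x y z H1 H2 /=; rewrite !andbT => /and3P[Ha Hb Hc].
  + by apply: knuth1; rewrite !inordK.
  + by apply: knuth2; rewrite !inordK.
- apply: knu_sym; apply: IH; by rewrite (perm_all _ (knu_perm Hst)).
- apply: knu_trans (IH1 Hs) (IH2 _); by rewrite -(perm_all _ (knu_perm Hst)).
Qed.

Lemma map_val_filter n (s : seq 'I_n) m :
  map val [seq j <- s | val j != m] = [seq k <- map val s | k != m].
Proof. by elim: s => //= j s IH; case: ifP => _ /=; rewrite IH. Qed.

Lemma cmr_val n (i : 'I_n) : map val (cmr_letter i) = cm n (n - i.+1).
Proof.
rewrite /cmr_letter.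
have E : [seq j <- rev (enum 'I_n) | j != rev_ord i] =
         [seq j <- rev (enum 'I_n) | val j != n - i.+1].
  by apply: eq_filter => j /=; rewrite -(inj_eq val_inj).
rewrite E map_val_filter map_rev val_enum_ord -cm_filter.
  by rewrite /D subn0.
by have := ltn_ord i; lia.
Qed.

Lemma all_cm n m : m < n -> all (fun k => k < n) (cm n m).
Proof. move=> H; apply/allP => j; rewrite /cm mem_cat !mem_D; lia. Qed.

Theorem mainTheorem14 (n : nat) (hn : 1 <= n) :
  (forall p q r : 'I_n, p <= q -> q < r ->
     knu_equiv (cmr_letter p ++ cmr_letter r ++ cmr_letter q)
               (cmr_letter r ++ cmr_letter p ++ cmr_letter q)) /\
  (forall p q r : 'I_n, p < q -> q <= r ->
     knu_equiv (cmr_letter q ++ cmr_letter p ++ cmr_letter r)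
               (cmr_letter q ++ cmr_letter r ++ cmr_letter p)) /\
  (forall u v : seq 'I_n, knu_equiv u v -> knu_equiv (cmr u) (cmr v)).
Proof.
case: n hn => // n' _.
have back : forall w : seq 'I_n'.+1, map (@inord n') (map val w) = w.
  by elim=> //= j w ->; rewrite inord_val.
have part1 : forall p q r : 'I_n'.+1, p <= q -> q < r ->
     knu_equiv (cmr_letter p ++ cmr_letter r ++ cmr_letter q)
               (cmr_letter r ++ cmr_letter p ++ cmr_letter q).
  move=> p q r Hpq Hqr.
  have := ltn_ord r; have := ltn_ord p => Hp Hr.
  rewrite -[X in knu_equiv X _]back -[X in knu_equiv _ X]back.
  apply: transfer; rewrite !map_cat !cmr_val.
    apply: P1; lia.
  apply/allP => j; rewrite /cm !mem_cat !mem_D; lia.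
have part2 : forall p q r : 'I_n'.+1, p < q -> q <= r ->
     knu_equiv (cmr_letter q ++ cmr_letter p ++ cmr_letter r)
               (cmr_letter q ++ cmr_letter r ++ cmr_letter p).
  move=> p q r Hpq Hqr.
  have := ltn_ord r; have := ltn_ord p => Hp Hr.
  rewrite -[X in knu_equiv X _]back -[X in knu_equiv _ X]back.
  apply: transfer; rewrite !map_cat !cmr_val.
    apply: P2; lia.
  apply/allP => j; rewrite /cm !mem_cat !mem_D; lia.
split=> //; split=> //.
have cmr_cat : forall a b : seq 'I_n'.+1, cmr (a ++ b) = cmr a ++ cmr b.
  by move=> a b; rewrite /cmr map_cat flatten_cat.
move=> u v; elim=> {u v} [u|u v l r H|u v _ IH|u v w _ IH1 _ IH2].
- exact: knu_refl.
- rewrite !cmr_cat; apply: knuE_cat.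
  case: H => x y z H1 H2; rewrite /cmr /= !cats0.
  + exact: part1.
  + exact: part2.
- exact: knu_sym.
- exact: knu_trans IH2.
Qed.
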